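(* Fix integers $1\le N_c\le N_f$, Zipf exponent $\delta>0$ with $p_f=f^{-\delta}/\sum_{n=1}^{N_f}n^{-\delta}$, and parameters $\alpha>2$, integer $M_1\ge1$, $B_{12}>0$, $W>0$, $R_0\ge0$; put $\gamma_0=2^{R_0/W}-1$. For $\lambda_{12}>0$, $P_{12}>0$ let $\mathsf C_1=\mathsf C_1(\lambda_{12},P_{12})=\lambda_{12}(P_{12}B_{12})^{2/\alpha}\,{}_2F_1[-\tfrac2\alpha,M_1;1-\tfrac2\alpha;-\tfrac{\gamma_0}{M_1B_{12}}]$ and let $\mathbf q^*=(q^*_f)_f$ be the maximizer of $\sum_{f=1}^{N_f}\frac{p_fq_f}{\mathsf C_1+q_f}$ over $\{\mathbf q\in[0,1]^{N_f}:\sum_fq_f\le N_c\}$, i.e. $q^*_f=\big[\frac{\sqrt{\mathsf C_1}}{\sqrt\nu}\sqrt{p_f}-\mathsf C_1\big]_0^1$ with $\nu>0$ such that $\sum_fq^*_f=N_c$. Then $q^*_f-q^*_{f+1}$ increases with $\lambda_{12}$ and with $P_{12}$: if $(\lambda_{12},P_{12})$ and $(\lambda'_{12},P'_{12})$ satisfy $\lambda_{12}\le\lambda'_{12}$, $P_{12}\le P'_{12}$ with at least one inequality strict, and $f\in\{1,\dots,N_f-1\}$ is such that $q^*_f,q^*_{f+1}\in(0,1)$ under both parameter choices, then $q^*_f-q^*_{f+1}$ is strictly larger under $(\lambda'_{12},P'_{12})$ than under $(\lambda_{12},P_{12})$.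
   Context: $[x]_0^1=\max\{\min\{x,1\},0\}$; ${}_2F_1$ is the Gauss hypergeometric function. $\lambda_{12}=\lambda_1/\lambda_2$ and $P_{12}=P_1/P_2$ are the macro-to-helper density and transmit power ratios, $B_{12}$ the bias ratio, $M_1$ the number of macro BS antennas. The objective is the helper-tier success probability in the low-user-density regime (each helper serves at most one user and helper activity probability tends to 0), and $\mathbf q^*$ is the optimal helper caching probability vector. *)

(* Defs.v *)
From Stdlib Require Import Reals Lra Lia.
From Coquelicot Require Import Coquelicot.
Open Scope R_scope.

Fixpoint poch (x : R) (n : nat) : R :=
  match n with
  | O => 1
  | S k => poch x k * (x + INR k)
  end.

(* Gauss hypergeometric series, convergent for |z| < 1. *)
Definition gauss_series (a b c z : R) : R :=
  Series (fun n => poch a n * poch b n / (poch c n * INR (Stdlib.Arith.Factorial.fact n)) * z ^ n).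

(* For 0 < z < 1 it is the Gauss series; for z <= 0 we use the
   analytic continuation given by Pfaff's transformation
     2F1(a,b;c;z) = (1-z)^(-b) 2F1(c-a,b;c;z/(z-1)),
   where z/(z-1) lies in [0,1) so the series converges. *)
Definition hyp2F1 (a b c z : R) : R :=
  if Rle_dec z 0 then Rpower (1 - z) (- b) * gauss_series (c - a) b c (z / (z - 1))
  else gauss_series a b c z.

Fixpoint sum1 (n : nat) (g : nat -> R) : R :=
  match n with
  | O => 0
  | S k => sum1 k g + g (S k)
  end.

Definition zipf (Nf : nat) (delta : R) (f : nat) : R :=
  Rpower (INR f) (- delta) / sum1 Nf (fun n => Rpower (INR n) (- delta)).

Definition gamma0 (R0 W : R) : R := Rpower 2 (R0 / W) - 1.

Definition C1_macro (alpha : R) (M1 : nat) (B12 W R0 lam12 P12 : R) : R :=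
  lam12 * Rpower (P12 * B12) (2 / alpha)
  * hyp2F1 (- (2 / alpha)) (INR M1) (1 - 2 / alpha)
           (- (gamma0 R0 W / (INR M1 * B12))).

Definition feasible (Nf Nc : nat) (q : nat -> R) : Prop :=
  (forall f, (1 <= f <= Nf)%nat -> 0 <= q f <= 1) /\ sum1 Nf q <= INR Nc.

Definition objective (Nf : nat) (p : nat -> R) (C : R) (q : nat -> R) : R :=
  sum1 Nf (fun f => p f * q f / (C + q f)).

Definition is_opt_cache (Nf Nc : nat) (p : nat -> R) (C : R) (q : nat -> R) : Prop :=
  feasible Nf Nc q /\
  forall q', feasible Nf Nc q' -> objective Nf p C q' <= objective Nf p C q.

(* Main.v *)
Require Import Defs.
From Stdlib Require Import Reals Lra Lia.
From Coquelicot Require Import Coquelicot.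
Open Scope R_scope.

Lemma sum1_sub n F G : sum1 n F - sum1 n G = sum1 n (fun k => F k - G k).
Proof. induction n; simpl; [lra|]. rewrite <- IHn. lra. Qed.

Lemma sum1_zero n F : (forall k, (1<=k<=n)%nat -> F k = 0) -> sum1 n F = 0.
Proof. induction n; intros H; simpl; [lra|]. rewrite IHn by (intros; apply H; lia).
 rewrite H by lia. lra. Qed.

Lemma sum1_point n a F : (1<=a<=n)%nat -> (forall k, k <> a -> F k = 0) -> sum1 n F = F a.
Proof. induction n; intros Ha H; [lia|]. simpl.
 destruct (Nat.eq_dec a (S n)) as [->|Hne].
 - rewrite (sum1_zero n F); [lra|]. intros k Hk; apply H; lia.
 - rewrite IHn; [| lia | exact H]. rewrite (H (S n)) by lia. lra. Qed.

Lemma sum1_two n a b F : (1<=a<=n)%nat -> (1<=b<=n)%nat -> a <> b ->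
  (forall k, k <> a -> k <> b -> F k = 0) -> sum1 n F = F a + F b.
Proof. intros Ha Hb Hab H.
 set (G := fun k => if Nat.eqb k a then F k else 0).
 assert (E1 : sum1 n G = G a) by (apply sum1_point; auto; intros k Hk; unfold G;
   destruct (Nat.eqb_spec k a); [lia|reflexivity]).
 assert (E2 : sum1 n (fun k => F k - G k) = F b - G b).
 { apply (sum1_point n b (fun k => F k - G k)); auto. intros k Hk. unfold G.
   destruct (Nat.eqb_spec k a); [subst; lra|]. rewrite H; auto; lra. }
 rewrite <- sum1_sub in E2. unfold G in E1, E2. rewrite Nat.eqb_refl in E1.
 destruct (Nat.eqb_spec b a); [lia|]. lra. Qed.

Lemma sum1_le n F G : (forall k, (1<=k<=n)%nat -> F k <= G k) -> sum1 n F <= sum1 n G.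
Proof. induction n; intros H; simpl; [lra|]. assert (H1 := H (S n) ltac:(lia)).
 assert (sum1 n F <= sum1 n G) by (apply IHn; intros; apply H; lia). lra. Qed.

Lemma sum1_lt n F G a : (forall k, (1<=k<=n)%nat -> F k <= G k) -> (1<=a<=n)%nat ->
  F a < G a -> sum1 n F < sum1 n G.
Proof. induction n; intros H Ha Hlt; [lia|]. simpl.
 destruct (Nat.eq_dec a (S n)) as [->|Hne].
 - assert (sum1 n F <= sum1 n G) by (apply sum1_le; intros; apply H; lia). lra.
 - assert (sum1 n F < sum1 n G) by (apply IHn; auto; [intros; apply H; lia|lia]).
   assert (H1 := H (S n) ltac:(lia)). lra. Qed.

Section Opt.
Variables (Nf Nc : nat) (p : nat -> R) (C : R) (q : nat -> R).
Hypothesis hC : 0 < C.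
Hypothesis hp : forall k, (1<=k<=Nf)%nat -> 0 < p k.
Hypothesis hq : is_opt_cache Nf Nc p C q.

Lemma exchange g h : (1<=g<=Nf)%nat -> (1<=h<=Nf)%nat -> g <> h ->
  0 < q g -> q h < 1 -> p h * (C + q g)^2 <= p g * (C + q h)^2.
Proof.
 intros Hg Hh Hgh Hqg Hqh. destruct hq as [[Hb Hs] Hopt].
 destruct (Rle_lt_dec (p h * (C + q g)^2) (p g * (C + q h)^2)) as [|HD]; [assumption|exfalso].
 assert (pg := hp g Hg). assert (ph := hp h Hh).
 assert (Bg := Hb g Hg). assert (Bh := Hb h Hh).
 set (D := p h * (C + q g)^2 - p g * (C + q h)^2).
 set (K := p h * (C + q g) + p g * (C + q h)).
 assert (HK : 0 < K) by (unfold K; nra).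
 assert (HDp : 0 < D) by (unfold D; lra).
 set (e := Rmin (q g) (Rmin (1 - q h) (D / (2*K)))).
 assert (He1 : e <= q g) by apply Rmin_l.
 assert (He2 : e <= 1 - q h) by (eapply Rle_trans; [apply Rmin_r|apply Rmin_l]).
 assert (He3 : e <= D/(2*K)) by (eapply Rle_trans; [apply Rmin_r|apply Rmin_r]).
 assert (He0 : 0 < e).
 { unfold e. apply Rmin_pos; [lra|apply Rmin_pos; [lra|]]. apply Rdiv_lt_0_compat; lra. }
 assert (HeK : e * K <= D / 2).
 { apply Rmult_le_compat_r with (r:=K) in He3; [|lra].
   replace (D / (2*K) * K) with (D/2) in He3 by (field; lra). lra. }
 set (q2 := fun k => if Nat.eqb k g then q g - e else if Nat.eqb k h then q h + e else q k).
 assert (Q2g : q2 g = q g - e) by (unfold q2; rewrite Nat.eqb_refl; auto).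
 assert (Q2h : q2 h = q h + e).
 { unfold q2; destruct (Nat.eqb_spec h g); [lia|]; rewrite Nat.eqb_refl; auto. }
 assert (Q2o : forall k, k <> g -> k <> h -> q2 k = q k).
 { intros k H1 H2; unfold q2; destruct (Nat.eqb_spec k g); [lia|];
   destruct (Nat.eqb_spec k h); [lia|auto]. }
 assert (Hf : feasible Nf Nc q2).
 { split.
   - intros k Hk. destruct (Nat.eq_dec k g) as [->|]; [rewrite Q2g; lra|].
     destruct (Nat.eq_dec k h) as [->|]; [rewrite Q2h; lra|]. rewrite Q2o; auto.
   - assert (E : sum1 Nf q2 - sum1 Nf q = 0).
     { rewrite sum1_sub. rewrite (sum1_two Nf g h); auto.
       + rewrite Q2g, Q2h; lra.
       + intros k H1 H2; rewrite Q2o; auto; lra. }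
     lra. }
 assert (Ho := Hopt q2 Hf). unfold objective in Ho.
 assert (E : sum1 Nf (fun f => p f * q2 f / (C + q2 f)) - sum1 Nf (fun f => p f * q f / (C + q f))
   = (p g * (q g - e) / (C + (q g - e)) - p g * q g / (C + q g))
   + (p h * (q h + e) / (C + (q h + e)) - p h * q h / (C + q h))).
 { rewrite sum1_sub. rewrite (sum1_two Nf g h); auto.
   + rewrite Q2g, Q2h; lra.
   + intros k H1 H2; rewrite Q2o; auto; lra. }
 assert (E2 : (p g * (q g - e) / (C + (q g - e)) - p g * q g / (C + q g))
   + (p h * (q h + e) / (C + (q h + e)) - p h * q h / (C + q h))
   = C * e * (p h * (C + q g - e) * (C + q g) - p g * (C + q h + e) * (C + q h))
     / ((C + q g - e) * (C + q g) * (C + q h + e) * (C + q h))).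
 { field. repeat split; lra. }
 assert (Hpos : 0 < C * e * (p h * (C + q g - e) * (C + q g) - p g * (C + q h + e) * (C + q h))
     / ((C + q g - e) * (C + q g) * (C + q h + e) * (C + q h))).
 { apply Rdiv_lt_0_compat.
   - apply Rmult_lt_0_compat; [nra|].
     replace (p h * (C + q g - e) * (C + q g) - p g * (C + q h + e) * (C + q h)) with (D - e*K)
       by (unfold D, K; ring). lra.
   - repeat apply Rmult_lt_0_compat; lra. }
 lra.
Qed.

Lemma fullsum h : (1<=h<=Nf)%nat -> q h < 1 -> ~ sum1 Nf q < INR Nc.
Proof.
 intros Hh Hqh Hlt. destruct hq as [[Hb Hs] Hopt].
 assert (ph := hp h Hh). assert (Bh := Hb h Hh).
 set (e := Rmin (1 - q h) (INR Nc - sum1 Nf q)).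
 assert (He0 : 0 < e) by (apply Rmin_pos; lra).
 assert (He1 : e <= 1 - q h) by apply Rmin_l.
 assert (He2 : e <= INR Nc - sum1 Nf q) by apply Rmin_r.
 set (q2 := fun k => if Nat.eqb k h then q h + e else q k).
 assert (Q2h : q2 h = q h + e) by (unfold q2; rewrite Nat.eqb_refl; auto).
 assert (Q2o : forall k, k <> h -> q2 k = q k).
 { intros k H2; unfold q2; destruct (Nat.eqb_spec k h); [lia|auto]. }
 assert (Hf : feasible Nf Nc q2).
 { split.
   - intros k Hk. destruct (Nat.eq_dec k h) as [->|]; [rewrite Q2h; lra|]. rewrite Q2o; auto.
   - assert (E : sum1 Nf q2 - sum1 Nf q = e).
     { rewrite sum1_sub. rewrite (sum1_point Nf h); auto.
       + rewrite Q2h; lra.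
       + intros k H2; rewrite Q2o; auto; lra. }
     lra. }
 assert (Ho := Hopt q2 Hf). unfold objective in Ho.
 assert (E : sum1 Nf (fun f => p f * q2 f / (C + q2 f)) - sum1 Nf (fun f => p f * q f / (C + q f))
   = p h * (q h + e) / (C + (q h + e)) - p h * q h / (C + q h)).
 { rewrite sum1_sub. rewrite (sum1_point Nf h); auto.
   + rewrite Q2h; lra.
   + intros k H2; rewrite Q2o; auto; lra. }
 assert (E2 : p h * (q h + e) / (C + (q h + e)) - p h * q h / (C + q h)
   = p h * C * e / ((C + q h + e) * (C + q h))) by (field; split; lra).
 assert (0 < p h * C * e / ((C + q h + e) * (C + q h))).
 { apply Rdiv_lt_0_compat; [|apply Rmult_lt_0_compat]; try lra.
   apply Rmult_lt_0_compat; [apply Rmult_lt_0_compat|]; lra. }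
 lra.
Qed.
End Opt.

Lemma main_abstract (Nf Nc : nat) (p : nat -> R) (C C' : R) (q q' : nat -> R) (f : nat)
  (hC : 0 < C) (hCC : C < C') (hp : forall k, (1<=k<=Nf)%nat -> 0 < p k)
  (hq : is_opt_cache Nf Nc p C q) (hq' : is_opt_cache Nf Nc p C' q')
  (hf : (1 <= f <= Nf - 1)%nat) (hpd : p (S f) < p f)
  (hint : 0 < q f < 1 /\ 0 < q (S f) < 1)
  (hint' : 0 < q' f < 1 /\ 0 < q' (S f) < 1) :
  q f - q (S f) < q' f - q' (S f).
Proof.
 assert (hC' : 0 < C') by lra.
 assert (Hf1 : (1 <= f <= Nf)%nat) by lia.
 assert (Hf2 : (1 <= S f <= Nf)%nat) by lia.
 destruct hint as [[a1 a2] [a3 a4]]. destruct hint' as [[b1 b2] [b3 b4]].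
 assert (pf := hp f Hf1). assert (pf1 := hp (S f) Hf2).
 assert (Hbig : C + q f < C' + q' f).
 { destruct (Rlt_le_dec (C + q f) (C' + q' f)) as [|HA]; [assumption|exfalso].
   assert (Hall : forall g, (1<=g<=Nf)%nat -> q' g <= q g).
   { intros g Hg. destruct (Nat.eq_dec g f) as [->|Hne]; [lra|].
     destruct (Rle_lt_dec (q' g) (q g)) as [|Hgt]; [assumption|exfalso].
     assert (Bq := proj1 (proj1 hq) g Hg). assert (Bq' := proj1 (proj1 hq') g Hg).
     assert (E1 := exchange Nf Nc p C' q' hC' hp hq' g f Hg Hf1 Hne ltac:(lra) b2).
     assert (E2 := exchange Nf Nc p C q hC hp hq f g Hf1 Hg ltac:(lia) a1 ltac:(lra)).
     assert (pg := hp g Hg).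
     assert (S1 : (C' + q' f)^2 <= (C + q f)^2) by nra.
     assert (S2 : p f * (C' + q' g)^2 <= p f * (C + q g)^2) by nra.
     assert (S3 : (C' + q' g)^2 <= (C + q g)^2).
     { apply Rmult_le_reg_l with (r := p f); lra. }
     nra. }
   assert (Hs : sum1 Nf q' < sum1 Nf q) by (apply (sum1_lt Nf q' q f); auto; lra).
   apply (fullsum Nf Nc p C' q' hC' hp hq' f Hf1 b2).
   destruct hq as [[_ Hs0] _]. lra. }
 assert (E1 := exchange Nf Nc p C q hC hp hq f (S f) Hf1 Hf2 ltac:(lia) a1 a4).
 assert (E2 := exchange Nf Nc p C q hC hp hq (S f) f Hf2 Hf1 ltac:(lia) a3 a2).
 assert (E3 := exchange Nf Nc p C' q' hC' hp hq' f (S f) Hf1 Hf2 ltac:(lia) b1 b4).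
 assert (E4 := exchange Nf Nc p C' q' hC' hp hq' (S f) f Hf2 Hf1 ltac:(lia) b3 b2).
 set (u := C + q f) in *. set (u1 := C + q (S f)) in *.
 set (v := C' + q' f) in *. set (v1 := C' + q' (S f)) in *.
 assert (Eu : p (S f) * u^2 = p f * u1^2) by lra.
 assert (Ev : p (S f) * v^2 = p f * v1^2) by lra.
 assert (hu : 0 < u) by (unfold u; lra). assert (hu1 : 0 < u1) by (unfold u1; lra).
 assert (hv : 0 < v) by lra. assert (hv1 : 0 < v1) by (unfold v1; lra).
 assert (Hlt : u1 < u).
 { assert (p (S f) * u^2 < p f * u^2) by (apply Rmult_lt_compat_r; nra).
   assert (u1^2 < u^2) by (apply Rmult_lt_reg_l with (r := p f); lra). nra. }
 assert (Hsq : p f * (u1 * v)^2 = p f * (v1 * u)^2).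
 { replace (p f * (u1 * v)^2) with ((p f * u1^2) * v^2) by ring.
   replace (p f * (v1 * u)^2) with ((p f * v1^2) * u^2) by ring.
   rewrite <- Eu, <- Ev. ring. }
 assert (Hsq2 : (u1 * v)^2 = (v1 * u)^2).
 { apply Rmult_eq_reg_l with (r := p f); lra. }
 assert (Heq : u1 * v = v1 * u).
 { assert (0 < u1 * v) by nra. assert (0 < v1 * u) by nra. nra. }
 replace (q f - q (S f)) with (u - u1) by (unfold u, u1; ring).
 replace (q' f - q' (S f)) with (v - v1) by (unfold v, v1; ring).
 apply Rmult_lt_reg_l with (r := u); [lra|].
 replace (u * (v - v1)) with (v * (u - u1)) by nra.
 apply Rmult_lt_compat_r; lra.
Qed.

Lemma poch_pos x n : 0 < x -> 0 < poch x n.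
Proof. intros Hx; induction n; simpl; [lra|]. apply Rmult_lt_0_compat; auto.
 assert (0 <= INR n) by apply pos_INR. lra. Qed.

Lemma lim_ratio x y : 0 < y -> is_lim_seq (fun n => (x + INR n) / (y + INR n)) 1.
Proof.
 intros Hy.
 assert (H1 : is_lim_seq (fun n => y + INR n) p_infty).
 { eapply is_lim_seq_plus; [apply is_lim_seq_const| apply is_lim_seq_INR|]. reflexivity. }
 assert (H2 := is_lim_seq_inv _ _ H1 ltac:(discriminate)). simpl in H2.
 assert (H3 := is_lim_seq_plus' _ _ _ _ (is_lim_seq_const 1)
   (is_lim_seq_mult' _ _ _ _ (is_lim_seq_const (x - y)) H2)).
 replace (1 + (x - y) * 0) with 1 in H3 by ring.
 eapply is_lim_seq_ext; [|exact H3]. intros n; simpl.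
 assert (0 <= INR n) by apply pos_INR. field. lra.
Qed.

Lemma gauss_pos A b c w : 0 < A -> 0 < b -> 0 < c -> 0 <= w < 1 -> 1 <= gauss_series A b c w.
Proof.
 intros HA Hb Hc Hw. unfold gauss_series.
 set (t := fun n => poch A n * poch b n / (poch c n * INR (Stdlib.Arith.Factorial.fact n)) * w ^ n).
 assert (Hfact : forall n, 0 < INR (Stdlib.Arith.Factorial.fact n)) by (intros; apply lt_0_INR, Stdlib.Arith.Factorial.lt_O_fact).
 assert (Ht0 : forall n, 0 <= t n).
 { intros n; unfold t. apply Rmult_le_pos; [|apply pow_le; lra].
   apply Rlt_le, Rdiv_lt_0_compat; [apply Rmult_lt_0_compat|apply Rmult_lt_0_compat];
   auto using poch_pos. }
 assert (Hle : forall n, 0 <= 0 ^ n <= t n).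
 { intros [|n]; split.
   - simpl; lra.
   - unfold t; simpl. field_simplify; lra.
   - simpl; lra.
   - simpl. rewrite Rmult_0_l. apply Ht0. }
 assert (Hgeom : Series (fun n => 0 ^ n) = 1).
 { apply is_series_unique. replace 1 with (/ (1 - 0)) by field. apply is_series_geom.
   rewrite Rabs_R0; lra. }
 assert (Hex : ex_series t).
 { destruct (Req_dec w 0) as [Hw0|Hw0].
   - exists 1. eapply is_series_ext; [|replace 1 with (/(1-0)) by field;
       apply is_series_geom; rewrite Rabs_R0; lra].
     intros [|n]; unfold t; rewrite Hw0; simpl; [field|ring].
   - assert (Hwp : 0 < w) by lra.
     assert (Htp : forall n, 0 < t n).
     { intros n; unfold t. apply Rmult_lt_0_compat; [|apply pow_lt; lra].
       apply Rdiv_lt_0_compat; [apply Rmult_lt_0_compat|apply Rmult_lt_0_compat];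
       auto using poch_pos. }
     assert (HD : ex_series (fun n => Rabs (t n))).
     { apply (ex_series_DAlembert t w); [lra| intros n; specialize (Htp n); lra|].
       assert (L := is_lim_seq_mult' _ _ _ _ (is_lim_seq_mult' _ _ _ _ (is_lim_seq_const w)
            (lim_ratio A 1 ltac:(lra))) (lim_ratio b c Hc)).
       replace (w * 1 * 1) with w in L by ring.
       eapply is_lim_seq_ext; [|exact L]. intros n. simpl.
       rewrite Rabs_pos_eq.
       2:{ apply Rlt_le, Rdiv_lt_0_compat; apply Htp. }
       unfold t; simpl. idtac.
       assert (0 <= INR n) by apply pos_INR.
       assert (0 < poch A n) by auto using poch_pos.
       assert (0 < poch b n) by auto using poch_pos.
       assert (0 < poch c n) by auto using poch_pos.
       assert (0 < w ^ n) by (apply pow_lt; lra).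
       specialize (Hfact n).
       rewrite plus_INR, mult_INR. assert (0 <= INR n * INR (Stdlib.Arith.Factorial.fact n)) by (apply Rmult_le_pos; lra). field. repeat split; lra. }
     eapply ex_series_ext; [|exact HD]. intros n; apply Rabs_pos_eq, Ht0. }
 rewrite <- Hgeom. apply Series_le; auto.
Qed.

Lemma Rpower_pos' x y : 0 < Rpower x y.
Proof. unfold Rpower; apply exp_pos. Qed.

Lemma hyp_pos alpha M1 B12 W R0 : 2 < alpha -> (1 <= M1)%nat -> 0 < B12 -> 0 < W -> 0 <= R0 ->
  0 < hyp2F1 (- (2 / alpha)) (INR M1) (1 - 2 / alpha) (- (gamma0 R0 W / (INR M1 * B12))).
Proof.
 intros Ha HM HB HW HR.
 assert (HM' : 1 <= INR M1) by (apply (le_INR 1); lia).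
 assert (Hg : 0 <= gamma0 R0 W).
 { unfold gamma0. assert (Rpower 2 0 <= Rpower 2 (R0 / W)).
   { apply Rle_Rpower; [lra|]. apply Rmult_le_pos; [lra|apply Rlt_le, Rinv_0_lt_compat; lra]. }
   rewrite Rpower_O in H by lra. lra. }
 set (z := - (gamma0 R0 W / (INR M1 * B12))).
 assert (Hz : z <= 0).
 { unfold z. assert (0 <= gamma0 R0 W / (INR M1 * B12)); [|lra].
   apply Rmult_le_pos; [lra|apply Rlt_le, Rinv_0_lt_compat; nra]. }
 assert (H2a : 0 < 2 / alpha < 1).
 { split; [apply Rdiv_lt_0_compat; lra|]. apply Rmult_lt_reg_r with alpha; [lra|].
   unfold Rdiv; rewrite Rmult_assoc, Rinv_l by lra. lra. }
 unfold hyp2F1. destruct (Rle_dec z 0) as [_|]; [|lra].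
 apply Rmult_lt_0_compat; [apply Rpower_pos'|].
 eapply Rlt_le_trans; [|apply gauss_pos]; try lra.
 split.
 - replace (z / (z - 1)) with ((-z) * / (1 - z)) by (field; lra).
   apply Rmult_le_pos; [lra|]. apply Rlt_le, Rinv_0_lt_compat; lra.
 - apply Rmult_lt_reg_r with (1 - z); [lra|]. unfold Rdiv.
   replace (z * / (z - 1) * (1 - z)) with (-z) by (field; lra). lra.
Qed.

Theorem corollary3 (Nc Nf : nat) (delta alpha : R) (M1 : nat) (B12 W R0 : R)
  (hNc : (1 <= Nc)%nat) (hNcf : (Nc <= Nf)%nat) (hdelta : 0 < delta)
  (halpha : 2 < alpha) (hM1 : (1 <= M1)%nat) (hB : 0 < B12) (hW : 0 < W)
  (hR0 : 0 <= R0)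
  (lam P lam' P' : R) (hlam : 0 < lam) (hP : 0 < P)
  (hlam' : 0 < lam') (hP' : 0 < P')
  (hle1 : lam <= lam') (hle2 : P <= P') (hstrict : lam < lam' \/ P < P')
  (q q' : nat -> R)
  (hq : is_opt_cache Nf Nc (zipf Nf delta) (C1_macro alpha M1 B12 W R0 lam P) q)
  (hq' : is_opt_cache Nf Nc (zipf Nf delta) (C1_macro alpha M1 B12 W R0 lam' P') q')
  (f : nat) (hf : (1 <= f <= Nf - 1)%nat)
  (hint : 0 < q f < 1 /\ 0 < q (S f) < 1)
  (hint' : 0 < q' f < 1 /\ 0 < q' (S f) < 1) :
  q f - q (S f) < q' f - q' (S f).
Proof.
 assert (Hh := hyp_pos alpha M1 B12 W R0 halpha hM1 hB hW hR0).
 set (h := hyp2F1 (- (2 / alpha)) (INR M1) (1 - 2 / alpha) (- (gamma0 R0 W / (INR M1 * B12)))) in *.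
 assert (H2a : 0 < 2 / alpha) by (apply Rdiv_lt_0_compat; lra).
 set (X := Rpower (P * B12) (2 / alpha)). set (X' := Rpower (P' * B12) (2 / alpha)).
 assert (HX : 0 < X) by apply Rpower_pos'.
 assert (HXX : X <= X') by (apply Rle_Rpower_l; nra).
 assert (HLX : lam * X < lam' * X').
 { destruct hstrict as [Hl|Hp].
   - apply Rlt_le_trans with (lam' * X); [nra|]. nra.
   - assert (X < X') by (apply Rlt_Rpower_l; nra). nra. }
 assert (HC : 0 < C1_macro alpha M1 B12 W R0 lam P).
 { unfold C1_macro. fold h. fold X. apply Rmult_lt_0_compat; [nra|lra]. }
 assert (HCC : C1_macro alpha M1 B12 W R0 lam P < C1_macro alpha M1 B12 W R0 lam' P').
 { unfold C1_macro. fold h. fold X. fold X'. nra. }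
 set (Sm := sum1 Nf (fun n => Rpower (INR n) (- delta))).
 assert (HS : 0 < Sm).
 { unfold Sm. rewrite <- (sum1_zero Nf (fun _ => 0)) by auto.
   apply (sum1_lt Nf _ _ 1%nat); [intros; apply Rlt_le, Rpower_pos'|lia|apply Rpower_pos']. }
 assert (hp : forall k, (1 <= k <= Nf)%nat -> 0 < zipf Nf delta k).
 { intros k _. unfold zipf. fold Sm. apply Rdiv_lt_0_compat; [apply Rpower_pos'|lra]. }
 assert (hpd : zipf Nf delta (S f) < zipf Nf delta f).
 { unfold zipf. fold Sm. unfold Rdiv. apply Rmult_lt_compat_r; [apply Rinv_0_lt_compat; lra|].
   rewrite !Rpower_Ropp. apply Rinv_lt_contravar.
   - apply Rmult_lt_0_compat; apply Rpower_pos'.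
   - apply Rlt_Rpower_l; [lra|]. rewrite S_INR. split; [apply (lt_INR 0); lia|lra]. }
 exact (main_abstract Nf Nc (zipf Nf delta) _ _ q q' f HC HCC hp hq hq' hf hpd hint hint').
Qed.
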